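(* Let $d\ge7$, $\epsilon>0$ and $\Delta\ge\sqrt d\,\epsilon$. Let $\Gamma\subseteq\{-1,1\}^{d-1}$ be a set such that any two distinct $x,y\in\Gamma$ satisfy $\sum_{j=1}^{d-1}\mathbf 1\{x_j\ne y_j\}>\frac{d-1}4$, and define \[ \Theta=\{(\Delta,\epsilon u_1,\dots,\epsilon u_{d-1}):(u_1,\dots,u_{d-1})\in\Gamma\}\subset\mathbb R^d. \] Then for all $\theta\ne\theta'\in\Theta$, the internal angle satisfies \[ \frac{\sqrt{d-1}\,\epsilon}{2\Delta}\le\angle(\theta,\theta')\le\frac\pi2. \]
   Context: For nonzero $\theta,\theta'\in\mathbb R^d$, the internal angle is $\angle(\theta,\theta')=\arccos\big(\langle\theta,\theta'\rangle/(\|\theta\|\|\theta'\|)\big)\in[0,\pi]$, with the Euclidean inner product and norm. *)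

(* Defs.v *)
From HB Require Import structures.
From mathcomp Require Import all_boot all_order all_algebra.
From mathcomp Require Import all_classical all_reals.
From mathcomp Require Import trigo.
Set Implicit Arguments. Unset Strict Implicit. Unset Printing Implicit Defensive.
Import Order.TTheory GRing.Theory Num.Theory.
Local Open Scope ring_scope.

Definition dotR {R : realType} (d : nat) (x y : 'I_d -> R) : R :=
  \sum_(i < d) x i * y i.
Definition normR {R : realType} (d : nat) (x : 'I_d -> R) : R :=
  Num.sqrt (dotR x x).
Definition angle {R : realType} (d : nat) (x y : 'I_d -> R) : R :=
  acos (dotR x y / (normR x * normR y)).

(* Hamming distance between sign vectors, encoded as booleans
   (true = +1, false = -1) *)
Definition hamming (n : nat) (x y : {ffun 'I_n -> bool}) : nat :=
  #|[set j | x j != y j]|.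

(* k-th coordinate (0-based) of the sign vector u in {-1,1}^(d-1) *)
Definition usign {R : realType} (n : nat) (u : {ffun 'I_n -> bool}) (k : nat) : R :=
  if @insub _ (fun m => m < n)%N _ k is Some j then (if u j then 1 else -1) else 0.

Definition theta_of {R : realType} (d : nat) (Delta eps : R)
  (u : {ffun 'I_(d - 1) -> bool}) : 'I_d -> R :=
  fun i => if val i == 0%N then Delta else eps * usign u (val i).-1.

(* Main.v *)
Require Import Defs.
From HB Require Import structures.
From mathcomp Require Import all_boot all_order all_algebra.
From mathcomp Require Import all_classical all_reals.
From mathcomp Require Import all_analysis ring lra.
Import Order.TTheory GRing.Theory Num.Theory.
Local Open Scope ring_scope.

Lemma usignE (R : realType) n (u : {ffun 'I_n -> bool}) (j : 'I_n) :
  usign u j = (if u j then 1 else -1 : R).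
Proof. by rewrite /usign valK. Qed.

Lemma ham_sum (R : realType) n (u u' : {ffun 'I_n -> bool}) :
  (hamming u u')%:R = \sum_(i < n) ((u i != u' i) : nat)%:R :> R.
Proof.
rewrite -natr_sum /hamming -sum1_card big_mkcond /=; congr (_%:R).
by apply: eq_bigr => i _; rewrite inE; case: (u i != u' i).
Qed.

Lemma ham_le n (u u' : {ffun 'I_n -> bool}) : (hamming u u' <= n)%N.
Proof. by rewrite /hamming -[X in (_ <= X)%N]card_ord max_card. Qed.

Lemma dot_theta (R : realType) d (Delta eps : R) (u u' : {ffun 'I_(d - 1) -> bool}) :
  (0 < d)%N ->
  dotR (theta_of Delta eps u) (theta_of Delta eps u') =
  Delta ^+ 2 + eps ^+ 2 * ((d - 1)%:R - 2 * (hamming u u')%:R).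
Proof.
move=> d0.
pose G (k : nat) := (if k == 0%N then Delta else eps * usign u k.-1) *
   (if k == 0%N then Delta else eps * usign u' k.-1).
have -> : dotR (theta_of Delta eps u) (theta_of Delta eps u') =
   \sum_(0 <= k < d) G k by rewrite big_mkord.
rewrite big_ltn // big_add1 -subn1 big_mkord /G /= expr2; congr (_ + _).
have -> : (d - 1)%:R = \sum_(i < d - 1) (1 : R) by rewrite sumr_const card_ord.
rewrite ham_sum mulr_sumr -sumrB mulr_sumr.
apply: eq_bigr => i _; rewrite !usignE.
by case: (u i); case: (u' i) => /=; rewrite ?mulr1 ?mulr0 ?subr0; lra.
Qed.

Lemma norm_theta (R : realType) d (Delta eps : R) (u : {ffun 'I_(d - 1) -> bool}) :
  (0 < d)%N ->
  dotR (theta_of Delta eps u) (theta_of Delta eps u) =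
  Delta ^+ 2 + eps ^+ 2 * (d - 1)%:R.
Proof.
move=> d0; rewrite dot_theta // ham_sum big1 ?mulr0 ?subr0 // => i _.
by rewrite eqxx.
Qed.

Lemma sin_sq_le (R : realType) (y : R) : 0 <= y -> sin y ^+ 2 <= y ^+ 2.
Proof.
rewrite le0r => /orP[/eqP->|y0]; first by rewrite sin0 expr0n.
have := @MVT R sin cos 0 y y0 (fun x _ => is_derive_sin x).
case; first by apply: derivable_within_continuous => x _; exact: derivable_sin.
move=> c _ hc.
rewrite sin0 subr0 in hc.
have h1 := cos_le1 c; have h2 := cos_geN1 c.
have h3 : cos c ^+ 2 <= 1 by rewrite cos2sin2 gerBl sqr_ge0.
rewrite hc subr0 exprMn -[leRHS]mul1r ler_pM2r // exprn_gt0 //.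
Qed.

Lemma cos_lb (R : realType) (x : R) : 0 <= x -> 1 - x ^+ 2 / 2 <= cos x.
Proof.
move=> x0.
have h : sin (x / 2) ^+ 2 <= (x / 2) ^+ 2 by apply: sin_sq_le; rewrite divr_ge0.
have -> : x = (x / 2) *+ 2 by rewrite -mulr_natr mulfVK.
rewrite cos_mulr2n cos2sin2.
move: h; set t := x / 2; set s := sin t => h.
have e : 1 - (t *+ 2) ^+ 2 / 2 = 1 - 2 * t ^+ 2 by rewrite mulr2n; field.
rewrite e !mulr2n; lra.
Qed.
Theorem lemma5 (R : realType) (d : nat) (eps Delta : R)
  (Gamma : {set {ffun 'I_(d - 1) -> bool}}) :
  (7 <= d)%N -> 0 < eps -> Num.sqrt (d%:R) * eps <= Delta ->
  (forall x y, x \in Gamma -> y \in Gamma -> x != y ->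
     (d - 1)%:R / 4 < (hamming x y)%:R :> R) ->
  forall th th' : 'I_d -> R,
    (exists2 u, u \in Gamma & th = theta_of Delta eps u) ->
    (exists2 u, u \in Gamma & th' = theta_of Delta eps u) ->
    th <> th' ->
    Num.sqrt ((d - 1)%:R) * eps / (2 * Delta) <= angle th th' /\
    angle th th' <= pi / 2.
Proof.
move=> d7 e0 hD hG th th' [u uG ->] [u' u'G ->] neq.
have uu : u != u' by apply/eqP => E; apply: neq; rewrite E.
have hh := hG _ _ uG u'G uu.
have d0 : (0 < d)%N by apply: leq_trans d7.
have hle : (hamming u u')%:R <= (d - 1)%:R :> R by rewrite ler_nat ham_le.
have dn : d%:R = (d - 1)%:R + 1 :> R by rewrite natr1 subn1 prednK.
have n6 : 6%:R <= (d - 1)%:R :> R by rewrite ler_nat; exact: (leq_sub2r 1 d7).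
rewrite /angle /normR norm_theta // norm_theta // dot_theta //.
set n := (d - 1)%:R in hh hle dn n6 *.
set h := (hamming u u')%:R in hh hle *.
have sd0 : 0 <= Num.sqrt (d%:R : R) by [].
have sdsq : Num.sqrt (d%:R : R) ^+ 2 = d%:R by rewrite sqr_sqrtr.
have sn0 : 0 <= Num.sqrt n by [].
have snsq : Num.sqrt n ^+ 2 = n by rewrite sqr_sqrtr // /n.
have snd : Num.sqrt n <= Num.sqrt (d%:R : R) by rewrite ler_sqrt // dn lerDl.
have D0 : 0 < Delta.
  apply: lt_le_trans hD; apply: mulr_gt0 => //; rewrite sqrtr_gt0 dn; lra.
have hD2 : d%:R * eps ^+ 2 <= Delta ^+ 2.
  have p := ltW D0; have q := mulr_ge0 sd0 (ltW e0).
  by rewrite -sdsq -exprMn ler_pXn2r.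
set N := Delta ^+ 2 + eps ^+ 2 * n.
have N0 : 0 < N by rewrite /N; nra.
have -> : Num.sqrt N * Num.sqrt N = N by rewrite -expr2 sqr_sqrtr // ltW.
set A := Delta ^+ 2 + eps ^+ 2 * (n - 2 * h).
have A0 : 0 <= A by rewrite /A; nra.
have AN : A <= N by rewrite /A /N; nra.
have c0 : 0 <= A / N by rewrite divr_ge0 // ltW.
have c1 : A / N <= 1 by rewrite ler_pdivrMr // mul1r.
have cI : A / N \in `[-1, 1] by rewrite in_itv /=; apply/andP; split => //; lra.
have a0 := acos_ge0 (_ : -1 <= A / N <= 1).
have api := acos_lepi (_ : -1 <= A / N <= 1).
have aI : acos (A / N) \in `[0, pi] by rewrite in_itv /= a0 ?api //; apply/andP; split; lra.
have pi2 := pi_ge2 R.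
split.
  set x := _ / (2 * Delta).
  have x0 : 0 <= x by rewrite /x divr_ge0 // ?mulr_ge0 // ?ltW //; lra.
  have x1 : x <= 1 / 2.
    rewrite /x ler_pdivrMr; last lra.
    have : Num.sqrt n * eps <= Delta by apply: le_trans hD; nra.
    lra.
  have xI : x \in `[0, pi] by rewrite in_itv /= x0 /=; lra.
  have xsq : x ^+ 2 = n * eps ^+ 2 / (4 * Delta ^+ 2).
    have DD : Delta != 0 by rewrite gt_eqF.
    rewrite /x -[in RHS]snsq; field; exact: DD.
  have key : A / N <= 1 - x ^+ 2 / 2.
    rewrite xsq.
    have D20 : 0 < Delta ^+ 2 by rewrite exprn_gt0.
    have -> : 1 - n * eps ^+ 2 / (4 * Delta ^+ 2) / 2 =
      (8 * Delta ^+ 2 - n * eps ^+ 2) / (8 * Delta ^+ 2) by field; lra.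
    rewrite ler_pdivrMr // mulrAC ler_pdivlMr; last lra.
    rewrite /A /N.
    have E0 : 0 <= eps ^+ 2 by exact: sqr_ge0.
    have k1 : 0 <= eps ^+ 2 * (Delta ^+ 2 * (4 * h - n)).
      by apply: mulr_ge0 => //; apply: mulr_ge0; [exact: ltW | lra].
    have k2 : 0 <= eps ^+ 2 * (n * (3 * Delta ^+ 2 - n * eps ^+ 2)).
      apply: mulr_ge0 => //; apply: mulr_ge0; first lra.
      have : n * eps ^+ 2 <= Delta ^+ 2 by apply: le_trans hD2; rewrite dn ler_wpM2r // lerDl.
      lra.
    lra.
  rewrite leNgt; apply/negP => lt.
  have := @cos_lb R x x0.
  have : cos x < cos (acos (A / N)) by rewrite ltr_cos.
  rewrite acosK //; lra.
rewrite leNgt; apply/negP => lt.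
have p2I : (pi / 2 : R) \in `[0, pi] by rewrite in_itv /=; apply/andP; split; lra.
have : cos (acos (A / N)) < cos (pi / 2) by rewrite ltr_cos.
rewrite acosK // cos_pihalf; lra.
Qed.
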